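(* Let $(\mu_n)$ be an SI-martingale on $\mathbb{R}^d$ which is either of $(\mathcal{F},\tau,\zeta)$-cutout type or of $(\mathcal{F},\tau,\zeta)$-cell type. Let $(\mathcal{M},\nu)$ be a metric measure space, let $\{\Pi_t:\mathcal{M}\to\mathbb{R}^d\}_{t\in\Gamma}$ be a family of Borel maps parametrized by a metric space $(\Gamma,d)$, and set $\eta_t=\Pi_t\nu$ (push-forward). Suppose there are constants $0<\gamma_0,C<\infty$ such that $$\nu\big(\Pi_t^{-1}(\Lambda)\,\Delta\,\Pi_u^{-1}(\Lambda)\big)\le C\, d(t,u)^{\gamma_0}\quad\text{for all }\Lambda\in\mathcal{F},\ t,u\in\Gamma .$$ Then $$\sup_{t\neq u\in\Gamma,\ n\ge N_0}\frac{\left|\int\mu_n\,d\eta_t-\int\mu_n\,d\eta_u\right|}{2^{(\tau+\zeta)n}\,d(t,u)^{\gamma_0}}\le C'<\infty,$$ where $C'$ is a deterministic constant and $N_0$ is the random variable appearing in the definition of cutout type (respectively cell type).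
   Context: An SI-martingale on $\mathbb{R}^d$ is a sequence $(\mu_n)_{n\ge0}$ of random functions $\mu_n:\mathbb{R}^d\to[0,\infty)$ (identified with the measures $\mu_n(x)\,dx$) such that: (SI1) $\mu_0$ is a deterministic bounded function with bounded support; (SI2) there is an increasing filtration $(\mathcal{B}_n)$ with $\mu_n$ $\mathcal{B}_n$-measurable and $\mathbb{E}(\mu_{n+1}(x)\mid\mathcal{B}_n)=\mu_n(x)$ for all $x\in\mathbb{R}^d$, $n\in\mathbb{N}$; (SI3) there is $C<\infty$ with $\mu_{n+1}(x)\le C\mu_n(x)$ for all $x,n$; (SI4) there is $C<\infty$ such that for any $(C2^{-n})$-separated family $\mathcal{Q}$ of half-open dyadic cubes of side length $2^{-(n+1)}$, the restrictions $\{\mu_{n+1}|_Q\}_{Q\in\mathcal{Q}}$ are independent conditionally on $\mathcal{B}_n$. Let $\mathcal{F}$ be a family of Borel subsets of a fixed ball $B(0,R)\subset\mathbb{R}^d$, and $\tau,\zeta>0$. $(\mu_n)$ is of $(\mathcal{F},\tau,\zeta)$-cutout type if there are $C>0$ and a set $\Omega\in\mathcal{F}$ such that $\mu_n=2^{\tau n}\mathbf{1}_{A_n}$ with $A_n=\Omega\setminus\bigcup_{j=1}^{M_n}\Lambda^{(n)}_j$ for a random finite subfamily $\{\Lambda^{(n)}_j\}_{j=1}^{M_n}$ of $\mathcal{F}$, and there is an a.s. finite random variable $N_0$ with $M_n\le C2^{\zeta n}$ for all $n\ge N_0$. $(\mu_n)$ is of $(\mathcal{F},\tau,\zeta)$-cell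 type if there is $C>0$ such that $\mu_n=\sum_{j=1}^{M_n}c^{(n)}_j\mathbf{1}[F^{(n)}_j]$, where $\{F^{(n)}_j\}_{j=1}^{M_n}$ is a random subfamily of $\mathcal{F}$, the random variables satisfy $0\le c^{(n)}_j\le C2^{\tau n}$ for all $j,n$ a.s., and a.s. there is $N_0$ with $M_n\le C2^{\zeta n}$ for all $n\ge N_0$. $A\Delta B$ denotes symmetric difference. *)

(* Defs.v *)
From HB Require Import structures.
From mathcomp Require Import all_boot all_order all_algebra.
From mathcomp Require Import all_classical all_reals all_analysis.
Set Implicit Arguments. Unset Strict Implicit. Unset Printing Implicit Defensive.
Import Order.TTheory GRing.Theory Num.Theory.
Import numFieldNormedType.Exports.
Local Open Scope classical_set_scope.
Local Open Scope ring_scope.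

(* R^d with its Borel sigma-algebra (generated by the open sets of the
   product (max-norm) topology on row vectors). *)
Definition Rd (R : realType) (d : nat) :=
  g_sigma_algebraType (@open 'rV[R]_d).

Definition two_pow (R : realType) (a : R) : R := (2 : R) `^ a.

Definition dyadic_cube (R : realType) (d n : nat) (k : 'rV[int]_d) : set 'rV[R]_d :=
  [set x | forall i : 'I_d,
     (k ord0 i)%:~R / 2 ^+ n.+1 <= x ord0 i /\ x ord0 i < (k ord0 i + 1)%:~R / 2 ^+ n.+1].

Definition separated_cubes (R : realType) (d n : nat) (r : R) (K : set 'rV[int]_d) :=
  forall k k', K k -> K k' -> k != k' ->
    forall x y, @dyadic_cube R d n k x -> @dyadic_cube R d n k' y -> r <= `|x - y|.

(* Conditional independence of finitely many sigma-algebras Gs given the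
   sigma-algebra B: the product of (versions of) the conditional
   probabilities P(E_i | B) is a version of P(/\_i E_i | B). *)
Definition cond_prob_version (d : measure_display) (O : measurableType d)
  (R : realType) (P : probability O R) (B : set (set O)) (E : set O) (g : O -> R) :=
  (forall Y : set R, measurable Y -> B (g @^-1` Y)) /\
  forall A, B A -> (\int[P]_(w in A) (g w)%:E = P (A `&` E))%E.

Definition cond_indep (d : measure_display) (O : measurableType d)
  (R : realType) (P : probability O R) (B : set (set O)) (k : nat)
  (Gs : 'I_k -> set (set O)) :=
  forall (E : 'I_k -> set O) (g : 'I_k -> O -> R),
    (forall i, Gs i (E i)) ->
    (forall i, cond_prob_version P B (E i) (g i)) ->
    cond_prob_version P B (\bigcap_(i in [set: 'I_k]) E i)
                          (fun w => \prod_(i < k) g i w).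

Definition restr_sigma (d : measure_display) (O : measurableType d) (R : realType)
  (dd : nat) (f : O -> 'rV[R]_dd -> R) (Q : set 'rV[R]_dd) : set (set O) :=
  <<s [set f' | exists x Y, Q x /\ measurable Y /\ f' = (fun w => f w x) @^-1` Y] >>.

Definition SI_martingale (dO : measure_display) (O : measurableType dO)
  (R : realType) (P : probability O R) (d : nat)
  (mu : nat -> O -> 'rV[R]_d -> R) :=
  (forall n w x, 0 <= mu n w x) /\
  (exists mu0 : 'rV[R]_d -> R,
      (forall w, mu 0%N w = mu0) /\
      (exists M : R, forall x, mu0 x <= M) /\
      (exists r : R, forall x, mu0 x != 0 -> `|x| <= r)) /\
  (exists B : nat -> set (set O),
      (forall n, sigma_algebra setT (B n)) /\
      (forall n, B n `<=` measurable) /\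
      (forall n, B n `<=` B n.+1) /\
      (forall n x (Y : set R), measurable Y -> B n ((fun w => mu n w x) @^-1` Y)) /\
      (forall n x A, B n A ->
         (\int[P]_(w in A) (mu n.+1 w x)%:E = \int[P]_(w in A) (mu n w x)%:E)%E) /\
      (exists C : R, forall n w x, mu n.+1 w x <= C * mu n w x) /\
      (exists C : R, forall n (K : set 'rV[int]_d),
         @separated_cubes R d n (C / 2 ^+ n) K ->
         forall (k : nat) (ks : 'I_k -> 'rV[int]_d),
           injective ks -> (forall i, K (ks i)) ->
           cond_indep P (B n)
             (fun i => restr_sigma (mu n.+1) (@dyadic_cube R d n (ks i))))).

Definition cutout_type (dO : measure_display) (O : measurableType dO)
  (R : realType) (P : probability O R) (d : nat)
  (F : set (set 'rV[R]_d)) (tau zeta : R)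
  (mu : nat -> O -> 'rV[R]_d -> R) (N0 : O -> nat) :=
  exists (C : R) (Om : set 'rV[R]_d) (Lam : nat -> O -> seq (set 'rV[R]_d)),
    0 < C /\ F Om /\
    (forall n w L, L \in Lam n w -> F L) /\
    (forall n w x, mu n w x =
        two_pow (tau * n%:R) * (\1_(Om `\` \bigcup_(L in [set L | L \in Lam n w]) L) x)) /\
    {ae P, forall w, forall n, (N0 w <= n)%N -> (size (Lam n w))%:R <= C * two_pow (zeta * n%:R)}.

Definition cell_type (dO : measure_display) (O : measurableType dO)
  (R : realType) (P : probability O R) (d : nat)
  (F : set (set 'rV[R]_d)) (tau zeta : R)
  (mu : nat -> O -> 'rV[R]_d -> R) (N0 : O -> nat) :=
  exists (C : R) (cF : nat -> O -> seq (R * set 'rV[R]_d)),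
    0 < C /\
    (forall n w p, p \in cF n w -> F p.2) /\
    (forall n w x, mu n w x = \sum_(p <- cF n w) p.1 * \1_(p.2) x) /\
    {ae P, forall w, forall n p, p \in cF n w -> 0 <= p.1 <= C * two_pow (tau * n%:R)} /\
    {ae P, forall w, forall n, (N0 w <= n)%N -> (size (cF n w))%:R <= C * two_pow (zeta * n%:R)}.

(* Main.v *)
Require Import Defs.
From HB Require Import structures.
From mathcomp Require Import all_boot all_order all_algebra.
From mathcomp Require Import all_classical all_reals all_analysis.
From mathcomp Require Import measurable_realfun lra ring.
Import Order.TTheory GRing.Theory Num.Theory.
Import numFieldNormedType.Exports.
Local Open Scope classical_set_scope.
Local Open Scope ring_scope.


Lemma msum_indic (R : realType) dT (T : measurableType dT) (s : seq (R * set T)) :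
  (forall p, p \in s -> measurable p.2) ->
  measurable_fun setT (fun x => \sum_(p <- s) p.1 * \1_(p.2) x).
Proof.
elim: s => [|p s IH] hs.
  rewrite (_ : (fun x => _) = fun _ => 0); first exact: measurable_cst.
  by apply/funext => x; rewrite big_nil.
rewrite (_ : (fun x => _) = (fun x => p.1 * \1_(p.2) x + \sum_(q <- s) q.1 * \1_(q.2) x)); last first.
  by apply/funext => x; rewrite big_cons.
apply: measurable_funD.
  apply: measurable_funM; first exact: measurable_cst.
  by apply: measurable_indic; apply: hs; rewrite inE eqxx.
by apply: IH => q hq; apply: hs; rewrite inE hq orbT.
Qed.

Lemma int_sum_indic (R : realType) dT (T : measurableType dT)
  (mu : {measure set T -> \bar R}) (s : seq (R * set T)) :
  (forall p, p \in s -> 0 <= p.1 /\ measurable p.2) ->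
  (\int[mu]_(x in setT) (\sum_(p <- s) p.1 * \1_(p.2) x)%:E
   = \sum_(p <- s) (p.1%:E * mu p.2))%E.
Proof.
elim: s => [|p s IH] hs.
  rewrite big_nil; under eq_integral do rewrite big_nil; exact: integral0.
have hs' : forall q, q \in s -> 0 <= q.1 /\ measurable q.2.
  by move=> q hq; apply: hs; rewrite inE hq orbT.
have [p0 mp] : 0 <= p.1 /\ measurable p.2 by apply: hs; rewrite inE eqxx.
have ge0s : forall x, 0 <= \sum_(q <- s) q.1 * \1_(q.2) x.
  move=> x; rewrite big_seq; apply: sumr_ge0 => q hq.
  by apply: mulr_ge0; [case: (hs' q hq)|rewrite indicE].
under eq_integral do rewrite big_cons EFinD.
rewrite ge0_integralD //; last first.
- apply/measurable_EFinP; apply: msum_indic => q hq; by case: (hs' q hq).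
- by move=> x _; rewrite lee_fin.
- apply/measurable_EFinP; apply: measurable_funM; first exact: measurable_cst.
  exact: measurable_indic.
- by move=> x _; rewrite lee_fin; apply: mulr_ge0 => //; rewrite indicE.
rewrite (IH hs') big_cons; congr (_ + _)%E.
under eq_integral do rewrite EFinM.
rewrite ge0_integralZl //; last first.
  by apply: measurableT_comp => //; exact: measurable_indic.
by rewrite integral_indic // setIT.
Qed.

Lemma int_push (R : realType) dX (X : measurableType dX) dY (Y : measurableType dY)
  (mu : {measure set X -> \bar R}) (phi : X -> Y)
  (mphi : measurable_fun setT phi) (s : seq (R * set Y)) :
  (forall p, p \in s -> 0 <= p.1 /\ measurable p.2) ->
  (\int[pushforward mu phi]_x (\sum_(p <- s) p.1 * \1_(p.2) x)%:E
   = \sum_(p <- s) (p.1%:E * mu (phi @^-1` p.2)))%E.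
Proof.
move=> hs.
rewrite ge0_integral_pushforward //; last first.
- move=> x _; rewrite lee_fin big_seq; apply: sumr_ge0 => q hq.
  by apply: mulr_ge0; [case: (hs q hq)|rewrite indicE].
- by apply/measurable_EFinP; apply: msum_indic => q hq; case: (hs q hq).
rewrite preimage_setT.
set s' := map (fun p => (p.1, phi @^-1` p.2)) s.
have -> : (fun x => (\sum_(p <- s) p.1 * \1_(p.2) x)%:E) \o phi
    = (fun x => (\sum_(p <- s') p.1 * \1_(p.2) x)%:E).
  apply/funext => x /=; rewrite /s' big_map; congr (_%:E); apply: eq_bigr => p _.

rewrite int_sum_indic; first by rewrite /s' big_map.
move=> q /mapP [p hp ->] /=; case: (hs p hp) => h1 h2; split => //.
by rewrite -(setTI (_ @^-1` _)); apply: mphi.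
Qed.

Lemma symd_le (R : realType) dM (M : measurableType dM)
  (nu : {measure set M -> \bar R}) (A B : set M) (Dc : R) :
  measurable A -> measurable B -> (nu A < +oo)%E -> (nu B < +oo)%E ->
  (nu ((A `\` B) `|` (B `\` A)) <= Dc%:E)%E ->
  `|fine (nu A) - fine (nu B)| <= Dc.
Proof.
move=> mA mB fA fB hD.
have mD : measurable ((A `\` B) `|` (B `\` A)).
  by apply: measurableU; apply: measurableD.
have key : forall X Y, measurable X -> measurable Y ->
    (X `\` Y) `|` (Y `\` X) = (A `\` B) `|` (B `\` A) ->
    (nu X <= nu Y + Dc%:E)%E.
  move=> X Y mX mY hXY.
  apply: (@le_trans _ _ (nu (Y `|` ((X `\` Y) `|` (Y `\` X))))).
    apply: le_measure; rewrite ?inE //; first by apply: measurableU => //; rewrite hXY.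
    by move=> x Xx; case: (pselect (Y x)) => Yx; [left|right; left].
  apply: (le_trans (measureU2 _ _ _)) => //; first by rewrite hXY.
  by rewrite hXY; apply: leeD.
have fin0 : forall X, (nu X < +oo)%E -> nu X = (fine (nu X))%:E.
  by move=> X hX; rewrite fineK // ge0_fin_numE.
have h1 := key A B mA mB erefl.
have h2 := key B A mB mA (setUC _ _).
rewrite (fin0 A fA) (fin0 B fB) -EFinD lee_fin in h1.
rewrite (fin0 A fA) (fin0 B fB) -EFinD lee_fin in h2.
rewrite ler_norml; apply/andP; split; lra.
Qed.

Lemma diff_le (R : realType) dX (X : measurableType dX) dY (Y : measurableType dY)
  (mu : {measure set X -> \bar R}) (phi1 phi2 : X -> Y)
  (m1 : measurable_fun setT phi1) (m2 : measurable_fun setT phi2)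
  (s : seq (R * set Y)) (Dc : R) :
  (forall p, p \in s -> [/\ 0 <= p.1, measurable p.2,
     (mu (phi1 @^-1` p.2) < +oo)%E, (mu (phi2 @^-1` p.2) < +oo)%E &
     (mu ((phi1 @^-1` p.2 `\` phi2 @^-1` p.2) `|` (phi2 @^-1` p.2 `\` phi1 @^-1` p.2))
        <= Dc%:E)%E]) ->
  (`| \int[pushforward mu phi1]_x (\sum_(p <- s) p.1 * \1_(p.2) x)%:E
    - \int[pushforward mu phi2]_x (\sum_(p <- s) p.1 * \1_(p.2) x)%:E |
   <= ((\sum_(p <- s) p.1) * Dc)%:E)%E.
Proof.
move=> hs.
have hs0 : forall p, p \in s -> 0 <= p.1 /\ measurable p.2.
  by move=> p hp; case: (hs p hp).
rewrite !int_push //.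
have E : forall phi, (forall p, p \in s -> (mu (phi @^-1` p.2) < +oo)%E) ->
   (\sum_(p <- s) (p.1%:E * mu (phi @^-1` p.2)))%E
   = (\sum_(p <- s) p.1 * fine (mu (phi @^-1` p.2)))%:E.
  move=> phi hf; rewrite -sumEFin big_seq [RHS]big_seq; apply: eq_bigr => p hp.
  by rewrite EFinM fineK // ge0_fin_numE //; apply: hf.
rewrite (E phi1); last by move=> p hp; case: (hs p hp).
rewrite (E phi2); last by move=> p hp; case: (hs p hp).
rewrite -EFinB abse_EFin lee_fin -sumrB mulr_suml.
apply: (le_trans (ler_norm_sum _ _ _)).
rewrite big_seq [X in _ <= X]big_seq; apply: ler_sum => p hp.
case: (hs p hp) => p0 mp f1 f2 hD.
rewrite -mulrBr normrM ger0_norm //; apply: ler_wpM2l => //.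
apply: symd_le => //.
  by rewrite -(setTI (_ @^-1` _)); apply: m1.
by rewrite -(setTI (_ @^-1` _)); apply: m2.
Qed.

Lemma bigsetU_meas_seq dX (X : measurableType dX) (I : eqType) (G : I -> set X) (s : seq I) :
  (forall L, L \in s -> measurable (G L)) ->
  measurable (\big[setU/set0]_(L <- s) G L).
Proof. by move=> hs; rewrite big_seq; apply: bigsetU_measurable. Qed.

Lemma bigU_le (R : realType) dX (X : measurableType dX)
  (mu : {measure set X -> \bar R}) (I : eqType) (G : I -> set X) (s : seq I) (K : R) :
  (forall L, L \in s -> measurable (G L) /\ (mu (G L) <= K%:E)%E) ->
  (mu (\big[setU/set0]_(L <- s) G L) <= (size s)%:R%:E * K%:E)%E.
Proof.
elim: s => [|L s IH] hs; first by rewrite big_nil measure0 mul0e.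
have hs' : forall L', L' \in s -> measurable (G L') /\ (mu (G L') <= K%:E)%E.
  by move=> L' h; apply: hs; rewrite inE h orbT.
have [mL hL] : measurable (G L) /\ (mu (G L) <= K%:E)%E by apply: hs; rewrite inE eqxx.
rewrite big_cons; apply: (le_trans (measureU2 _ _ _)) => //.
  by apply: bigsetU_meas_seq => L' hL'; case: (hs' L' hL').
rewrite /= -addn1 natrD EFinD addeC muleDl //.
by rewrite mul1e; apply: leeD => //; apply: IH.
Qed.

Lemma bigcup_meas dY (Y : measurableType dY) (s : seq (set Y)) :
  (forall L, L \in s -> measurable L) ->
  measurable (\bigcup_(L in [set L | L \in s]) L).
Proof.
move=> hs; rewrite (bigcup_seq s id); exact: bigsetU_meas_seq.
Qed.

Definition symdp {X Y : Type} (phi1 phi2 : X -> Y) (A : set Y) :=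
  (phi1 @^-1` A `\` phi2 @^-1` A) `|` (phi2 @^-1` A `\` phi1 @^-1` A).

Lemma cut_le (R : realType) dX (X : measurableType dX) dY (Y : measurableType dY)
  (mu : {measure set X -> \bar R}) (phi1 phi2 : X -> Y)
  (m1 : measurable_fun setT phi1) (m2 : measurable_fun setT phi2)
  (Om : set Y) (s : seq (set Y)) (K : R) :
  measurable Om -> (forall L, L \in s -> measurable L) ->
  (forall L, L = Om \/ L \in s -> (mu (symdp phi1 phi2 L) <= K%:E)%E) ->
  (mu (symdp phi1 phi2 (Om `\` \bigcup_(L in [set L | L \in s]) L))
     <= ((1 + (size s)%:R) * K)%:E)%E.
Proof.
move=> mOm ms hK.
have mS : forall L, measurable L -> measurable (symdp phi1 phi2 L).
  move=> L mL; rewrite /symdp.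
  have p1 : measurable (phi1 @^-1` L) by rewrite -(setTI (_ @^-1` _)); apply: m1.
  have p2 : measurable (phi2 @^-1` L) by rewrite -(setTI (_ @^-1` _)); apply: m2.
  by apply: measurableU; apply: measurableD.
have mU : measurable (\big[setU/set0]_(L <- s) symdp phi1 phi2 L).
  by apply: bigsetU_meas_seq => L hL; apply: mS; apply: ms.
apply: (@le_trans _ _ (mu (symdp phi1 phi2 Om `|`
          \big[setU/set0]_(L <- s) symdp phi1 phi2 L))).
  apply: le_measure; rewrite ?inE //.
  - by apply: mS; apply: measurableD => //; apply: bigcup_meas.
  - by apply: measurableU => //; apply: mS.
  rewrite -(bigcup_seq s (symdp phi1 phi2)).
  move=> x; rewrite /symdp /=.
  have H : forall (f g : X -> Y), 
      (Om (f x) /\ ~ (exists2 L, L \in s & L (f x))) ->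
      ~ (Om (g x) /\ ~ (exists2 L, L \in s & L (g x))) ->
      ((Om (f x) /\ ~ Om (g x)) \/ (Om (g x) /\ ~ Om (f x))) \/
      (exists2 L, L \in s & ((L (f x) /\ ~ L (g x)) \/ (L (g x) /\ ~ L (f x)))).
    move=> f g [Of nUf] hg.
    case: (pselect (Om (g x))) => Og; last by left; left.
    right; case: (pselect (exists2 L, L \in s & L (g x))) => [[L hL Lg]|nUg].
      exists L => //; right; split => // Lf; apply: nUf; by exists L.
    by exfalso; apply: hg.
  case=> [[A B]|[A B]].
  - have := H phi1 phi2 A B.
    case=> [[[a b]|[a b]]|[L hL hL']].
    + by left; left.
    + by left; right.
    + right; exists L => //; by case: hL' => -[]; [left|right].
  - have := H phi2 phi1 A B.
    case=> [[[a b]|[a b]]|[L hL hL']].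
    + by left; right.
    + by left; left.
    + right; exists L => //; by case: hL' => -[]; [right|left].
apply: (le_trans (measureU2 _ _ _)) => //; first by apply: mS.
rewrite EFinM EFinD muleDl // mul1e; apply: leeD; first by apply: hK; left.
apply: bigU_le => L hL; split; first by apply: mS; apply: ms.
by apply: hK; right.
Qed.

Lemma sum_le_size (R : realType) (A : eqType) (s : seq (R * A)) (B : R) :
  (forall p, p \in s -> p.1 <= B) -> \sum_(p <- s) p.1 <= (size s)%:R * B.
Proof.
elim: s => [|p s IH] hs; first by rewrite big_nil mul0r.
rewrite big_cons /= -addn1 natrD mulrDl mul1r addrC; apply: lerD.
  by apply: IH => q hq; apply: hs; rewrite inE hq orbT.
by apply: hs; rewrite inE eqxx.
Qed.

Lemma two_pow_ge1 (R : realType) (x : R) : 0 <= x -> 1 <= (2 : R) `^ x.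
Proof.
move=> x0.
have h12 : (1 : R) <= 2 by rewrite ler1n.
by apply: le_trans (ler_powR h12 x0); rewrite powRr0.
Qed.

Theorem proposition6p1 (R : realType) (d : nat)
  (dO : measure_display) (O : measurableType dO) (P : probability O R)
  (Rad : R) (F : set (set 'rV[R]_d)) (tau zeta : R)
  (mu : nat -> O -> 'rV[R]_d -> R) (N0 : O -> nat)
  (dM : measure_display) (M : measurableType dM) (nu : {measure set M -> \bar R})
  (Gam : metricType R) (Pi : Gam -> M -> Rd R d) (gamma0 C : R) :
  (forall L, F L -> measurable (L : set (Rd R d)) /\ L `<=` ball (0 : 'rV[R]_d) Rad) ->
  0 < tau -> 0 < zeta ->
  SI_martingale P mu ->
  (cutout_type P F tau zeta mu N0 \/ cell_type P F tau zeta mu N0) ->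
  (forall t, measurable_fun [set: M] (Pi t)) ->
  (forall t L, F L -> (nu (Pi t @^-1` L) < +oo)%E) ->
  0 < gamma0 -> 0 < C ->
  (forall L t u, F L ->
     (nu ((Pi t @^-1` L `\` Pi u @^-1` L) `|` (Pi u @^-1` L `\` Pi t @^-1` L))
       <= (C * mdist t u `^ gamma0)%:E)%E) ->
  exists C' : R,
    {ae P, forall w, forall (t u : Gam) (n : nat), t <> u -> (N0 w <= n)%N ->
      (`| \int[pushforward nu (Pi t)]_x (mu n w x)%:E
          - \int[pushforward nu (Pi u)]_x (mu n w x)%:E |
       <= (C' * two_pow ((tau + zeta) * n%:R) * mdist t u `^ gamma0)%:E)%E}.

Proof.
move=> hF tau0 zeta0 _ hcase mPi hfin g0 C0 hsym.
have mpre : forall t (L : set (Rd R d)), measurable L -> measurable (Pi t @^-1` L).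
  by move=> t L mL; rewrite -(setTI (_ @^-1` _)); apply: mPi.
case: hcase => [[Cc [Om [Lam [Cc0 [FOm [FLam [hmu hae]]]]]]]
              | [Cl [cF [Cl0 [FcF [hmu [hae1 hae2]]]]]]].
- exists ((1 + Cc) * C).
  apply: filterS hae => w hw t u n tu hn.
  pose A := Om `\` \bigcup_(L in [set L | L \in Lam n w]) L.
  pose c := two_pow (tau * n%:R).
  have E : forall x, mu n w x = \sum_(p <- [:: (c, A)]) p.1 * \1_(p.2) x.
    by move=> x; rewrite hmu big_seq1.
  have EI : forall t', (\int[pushforward nu (Pi t')]_x (mu n w x)%:E
      = \int[pushforward nu (Pi t')]_x (\sum_(p <- [:: (c, A)]) p.1 * \1_(p.2) x)%:E)%E.
    by move=> t'; f_equal; apply/funext => x; rewrite E.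
  rewrite !EI.
  pose K := C * mdist t u `^ gamma0.
  have mOm : measurable (Om : set (Rd R d)) by case: (hF Om FOm).
  have mL : forall L, L \in Lam n w -> measurable (L : set (Rd R d)).
    by move=> L hL; case: (hF L (FLam n w L hL)).
  have mA : measurable (A : set (Rd R d)).
    by apply: measurableD => //; apply: bigcup_meas.
  have finA : forall t', (nu (Pi t' @^-1` A) < +oo)%E.
    move=> t'; apply: le_lt_trans (hfin t' Om FOm).
    apply: le_measure; rewrite ?inE; [exact: mpre|exact: mpre|].
    by move=> x [].
  apply: le_trans (@diff_le _ _ _ _ _ nu _ _ (mPi t) (mPi u) _ ((1 + (size (Lam n w))%:R) * K) _) _.
    move=> p; rewrite inE => /eqP -> /=; split => //.
    - exact: powR_ge0.
    - apply: (@cut_le _ _ _ _ _ nu _ _ (mPi t) (mPi u)) => // L [->|hL].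
        exact: hsym.
      exact: hsym (FLam n w L hL).
  rewrite big_seq1 /= lee_fin.
  have hz := @two_pow_ge1 _ _ (mulr_ge0 (ltW zeta0) (ler0n R n)).
  have hsz := hw n hn.
  have c0 : 0 <= c by exact: powR_ge0.
  have K0 : 0 <= K by apply: mulr_ge0; [exact: ltW|exact: powR_ge0].
  have -> : two_pow ((tau + zeta) * n%:R) = c * two_pow (zeta * n%:R).
    by rewrite /c /two_pow mulrDl powRD // pnatr_eq0 implybT.
  have d0 : 0 <= mdist t u `^ gamma0 by exact: powR_ge0.
  rewrite /K.
  set z := two_pow (zeta * n%:R) in hz hsz *.
  set dd := mdist t u `^ gamma0 in d0 *.
  set sz := (size (Lam n w))%:R in hsz *.
  have h1 : 1 + sz <= (1 + Cc) * z by have hz' : 1 <= z := hz; nra.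
  have h2 : 0 <= C * dd by apply: mulr_ge0 => //; exact: ltW.
  have := ler_wpM2r h2 h1.
  have := ler_wpM2l c0 (ler_wpM2r h2 h1).
  move=> h3 _; apply: le_trans h3 _.
  by rewrite le_eqVlt; apply/orP; left; apply/eqP; ring.
- exists (Cl * Cl * C).
  apply: filterS2 hae1 hae2 => w h1 h2 t u n tu hn.
  have EI : forall t', (\int[pushforward nu (Pi t')]_x (mu n w x)%:E
      = \int[pushforward nu (Pi t')]_x (\sum_(p <- cF n w) p.1 * \1_(p.2) x)%:E)%E.
    by move=> t'; f_equal; apply/funext => x; rewrite hmu.
  rewrite !EI.
  pose K := C * mdist t u `^ gamma0.
  apply: le_trans (@diff_le _ _ _ _ _ nu _ _ (mPi t) (mPi u) _ K _) _.
    move=> p hp; have Fp := FcF n w p hp; split.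
    - by case/andP: (h1 n p hp).
    - by case: (hF _ Fp).
    - exact: hfin.
    - exact: hfin.
    - exact: hsym.
  rewrite lee_fin.
  have hsz := h2 n hn.
  have hsum : \sum_(p <- cF n w) p.1 <= (size (cF n w))%:R * (Cl * two_pow (tau * n%:R)).
    by apply: sum_le_size => p hp; case/andP: (h1 n p hp).
  have c0 : 0 <= two_pow (tau * n%:R) by exact: powR_ge0.
  have z0 : 0 <= two_pow (zeta * n%:R) by exact: powR_ge0.
  have K0 : 0 <= K by apply: mulr_ge0; [exact: ltW|exact: powR_ge0].
  have -> : two_pow ((tau + zeta) * n%:R) = two_pow (tau * n%:R) * two_pow (zeta * n%:R).
    by rewrite /two_pow mulrDl powRD // pnatr_eq0 implybT.
  rewrite /K.
  set c := two_pow (tau * n%:R) in hsum c0 *.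
  set z := two_pow (zeta * n%:R) in hsz z0 *.
  set dd := mdist t u `^ gamma0.
  set sz := (size (cF n w))%:R in hsz hsum *.
  set S := \sum_(p <- cF n w) p.1 in hsum *.
  have hb : S <= Cl * z * (Cl * c).
    apply: le_trans hsum _; apply: ler_wpM2r => //.
    by apply: mulr_ge0; [exact: ltW|].
  have h2' : 0 <= C * dd by apply: mulr_ge0; [exact: ltW|exact: powR_ge0].
  apply: le_trans (ler_wpM2r h2' hb) _.
  by rewrite le_eqVlt; apply/orP; left; apply/eqP; ring.
Qed.
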